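(* For every $\varepsilon>0$ there exists $N$ such that for every $n\ge N$ the following holds: if $V$ is a set of $n$ vertices and $\mathcal{T}$ is a family (multiset, so repeated members are allowed and counted with multiplicity) of triangles on $V$ having no rainbow triangle, then $|\mathcal{T}|\le (1+\varepsilon)\frac{n^2}{8}$. Equivalently, $|\mathcal{T}|\le \frac{n^2}{8}(1+o(1))$ as $n\to\infty$.
   Context: A triangle on $V$ is a $3$-element subset $\{x,y,z\}\subseteq V$, identified with its edge set $\{\{x,y\},\{y,z\},\{x,z\}\}$. In a family (multiset) $\mathcal{T}$ of triangles, repeated copies of the same triangle are treated as different members. A rainbow triangle is a triangle $\{x,y,z\}$ on $V$ together with three distinct members $t_1,t_2,t_3$ of $\mathcal{T}$ (distinct as members of the multiset, though possibly equal as sets) such that $\{x,y\}$ is an edge of $t_1$, $\{y,z\}$ is an edge of $t_2$ and $\{x,z\}$ is an edge of $t_3$. *)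

(* Defs.v *)
(* Vertex set V = 'I_n (any n-element set, up to relabelling). *)
From HB Require Import structures.
From mathcomp Require Import all_boot all_order all_algebra.
From mathcomp Require Import reals.
Set Implicit Arguments. Unset Strict Implicit. Unset Printing Implicit Defensive.
Import Order.TTheory GRing.Theory Num.Theory.

Definition is_triangle (n : nat) (t : {set 'I_n}) : bool := #|t| == 3.

Definition edge_of (n : nat) (x y : 'I_n) (t : {set 'I_n}) : bool :=
  [&& x != y, x \in t & y \in t].

(* A family (multiset) of triangles is a list; members are its positions,
   so repeated copies count as distinct members. *)
Definition triangle_family (n : nat) (T : seq {set 'I_n}) : bool :=
  all (@is_triangle n) T.

Definition has_rainbow_triangle (n : nat) (T : seq {set 'I_n}) : Prop :=
  exists x y z : 'I_n,
    [/\ x != y, y != z & x != z] /\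
    exists i j k : 'I_(size T),
      [/\ i != j, j != k & i != k] /\
      [/\ edge_of x y (nth set0 T i), edge_of y z (nth set0 T j)
        & edge_of x z (nth set0 T k)].

(* Main.v *)
Require Import Defs.
From HB Require Import structures.
From mathcomp Require Import all_boot all_order all_algebra.
From mathcomp Require Import zify.
Set Implicit Arguments. Unset Strict Implicit. Unset Printing Implicit Defensive.

Lemma pick_other (U : finType) (A : {set U}) (x y : U) :
  2 < #|A| -> exists z, [/\ z \in A, z != x & z != y].
Proof.
move=> h.
have : 0 < #|A :\ x :\ y|.
  move: h; rewrite (cardsD1 x A) (cardsD1 y (A :\ x)).
  have := leq_b1 (x \in A); have := leq_b1 (y \in A :\ x); lia.
rewrite card_gt0 => /set0Pn [z]; rewrite !inE => /and3P [zy zx zA].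
by exists z.
Qed.

Lemma card3_mem (U : finType) (s : {set U}) x y z w :
  #|s| = 3 -> x \in s -> y \in s -> z \in s -> x != y -> y != z -> x != z ->
  w \in s -> [|| w == x, w == y | w == z].
Proof.
move=> hc xs ys zs xy yz xz ws; apply/negP => /negP h.
have sub : w |: (x |: (y |: [set z])) \subset s.
  apply/subsetP => u; rewrite !inE => /or4P [] /eqP ->; by [].
move: (subset_leq_card sub); rewrite hc !cardsU1 cards1 !inE.
move: h; rewrite !negb_or => /and3P [h1 h2 h3].
by rewrite (negbTE h1) (negbTE h2) (negbTE h3) (negbTE xy) (negbTE xz) (negbTE yz).
Qed.

Lemma same3 (U : finType) (s1 s2 : {set U}) x y z :
  #|s1| = 3 -> #|s2| = 3 -> x \in s1 -> y \in s1 -> z \in s1 ->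
  x \in s2 -> y \in s2 -> z \in s2 -> x != y -> y != z -> x != z -> s1 = s2.
Proof.
move=> c1 c2 x1 y1 z1 x2 y2 z2 xy yz xz.
have key : forall s : {set U}, #|s| = 3 -> x \in s -> y \in s -> z \in s ->
   forall w, (w \in s) = [|| w == x, w == y | w == z].
  move=> s cs xs ys zs w; apply/idP/idP; first exact: card3_mem cs xs ys zs xy yz xz.
  by case/or3P => /eqP ->.
by apply/setP => w; rewrite (key _ c1) // (key _ c2).
Qed.

Section Main.
Variable n : nat.
Variable T : seq {set 'I_n}.
Hypothesis Htri : triangle_family T.
Hypothesis Hnr : ~ has_rainbow_triangle T.

Definition tt (i : 'I_(size T)) := nth set0 T i.

Lemma tri_card i : #|tt i| = 3.
Proof. by apply/eqP; apply: (allP Htri); apply: mem_nth. Qed.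

Lemma edge_sym (x y : 'I_n) (s : {set 'I_n}) : edge_of x y s = edge_of y x s.
Proof. by rewrite /edge_of eq_sym; case: (x \in s); case: (y \in s); rewrite ?andbF ?andbT. Qed.

Lemma edgeP (x y : 'I_n) (s : {set 'I_n}) : x != y -> x \in s -> y \in s -> edge_of x y s.
Proof. by move=> *; apply/and3P. Qed.

Lemma rainbowP x y z i j k : i != j -> j != k -> i != k ->
  edge_of x y (tt i) -> edge_of y z (tt j) -> edge_of x z (tt k) -> False.
Proof.
move=> ij jk ik e1 e2 e3; apply: Hnr; exists x, y, z; split.
  by case/and3P: e1; case/and3P: e2; case/and3P: e3.
by exists i, j, k.
Qed.

Lemma rainbow x y z i j k : tt i != tt j -> tt j != tt k -> tt i != tt k ->
  edge_of x y (tt i) -> edge_of y z (tt j) -> edge_of x z (tt k) -> False.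
Proof.
move=> ij jk ik; apply: rainbowP.
- by apply: contraNneq ij => ->.
- by apply: contraNneq jk => ->.
- by apply: contraNneq ik => ->.
Qed.

Definition P (x y : 'I_n) : bool :=
  [exists i, edge_of x y (tt i)] &&
  [forall i, forall j, (edge_of x y (tt i) && edge_of x y (tt j)) ==> (tt i == tt j)].

Lemma PE x y : P x y -> exists i, edge_of x y (tt i).
Proof. by case/andP => /existsP. Qed.

Lemma Puniq x y i j : P x y -> edge_of x y (tt i) -> edge_of x y (tt j) -> tt i = tt j.
Proof.
case/andP => _ /forallP /(_ i) /forallP /(_ j) h e1 e2.
by apply/eqP; move: h; rewrite e1 e2.
Qed.

Lemma P_imp x y : P x y -> P y x.
Proof.
move=> h; apply/andP; split.
  by case: (PE h) => i e; apply/existsP; exists i; rewrite edge_sym.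
apply/forallP => i; apply/forallP => j; apply/implyP => /andP [e1 e2].
by apply/eqP; apply: (Puniq h); rewrite edge_sym.
Qed.

Lemma P_sym x y : P x y = P y x.
Proof. by apply/idP/idP; apply: P_imp. Qed.

Lemma P_neq x y : P x y -> x != y.
Proof. by case/PE => i /and3P []. Qed.

Lemma notP x y i : ~~ P x y -> edge_of x y (tt i) ->
  exists k, edge_of x y (tt k) /\ tt k != tt i.
Proof.
move=> nP ei; move: nP; rewrite /P negb_and => /orP [].
  by move=> /existsPn /(_ i); rewrite ei.
move=> /forallPn [i' /forallPn [j']]; rewrite negb_imply => /andP [/andP [e1 e2] ne].
case: (eqVneq (tt i') (tt i)) => h.
  by exists j'; split => //; rewrite -h eq_sym.
by exists i'.
Qed.

Lemma K x y z : P x y -> P y z -> P x z ->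
  exists i, [/\ x \in tt i, y \in tt i & z \in tt i].
Proof.
move=> pxy pyz pxz.
case: (PE pxy) => i ei; case: (PE pyz) => j ej; case: (PE pxz) => k ek.
case/and3P: (ei) => _ xi yi; case/and3P: (ej) => _ yj zj; case/and3P: (ek) => _ xk zk.
case: (boolP (z \in tt i)) => [zi|nzi]; first by exists i.
case: (boolP (x \in tt j)) => [xj|nxj]; first by exists j.
case: (boolP (y \in tt k)) => [yk|nyk]; first by exists k.
exfalso; apply: (rainbow (x:=x) (y:=y) (z:=z) (i:=i) (j:=j) (k:=k)) => //.
- by apply: contraNneq nzi => ->.
- by apply: contraNneq nxj => ->.
- by apply: contraNneq nzi => ->.
Qed.

Lemma uniqZ x y z w : P x y -> P x z -> P y z -> P x w -> P y w -> z = w.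
Proof.
move=> pxy pxz pyz pxw pyw.
case: (K pxy pyz pxz) => i [xi yi zi].
case: (K pxy pyw pxw) => j [xj yj wj].
have xy := P_neq pxy.
have eij : tt i = tt j by apply: (Puniq pxy); apply: edgeP.
rewrite -eij in wj.
have := card3_mem (tri_card i) xi yi zi xy (P_neq pyz) (P_neq pxz) wj.
case/or3P => /eqP h.
- by move: (P_neq pxw); rewrite h eqxx.
- by move: (P_neq pyw); rewrite h eqxx.
- by [].
Qed.

Definition mult (x y : 'I_n) := #|[set i | edge_of x y (tt i)]|.

Lemma mult_sym x y : mult x y = mult y x.
Proof. by rewrite /mult; apply: eq_card => j; rewrite !inE edge_sym. Qed.

Lemma mult_le2 x y : P x y -> mult x y <= 2.
Proof.
move=> pxy; rewrite leqNgt; apply/negP => h.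
have : 0 < mult x y by apply: leq_trans h.
rewrite /mult card_gt0 => /set0Pn [i]; rewrite inE => ei.
case: (pick_other i i h) => j [] ; rewrite inE => ej ji _.
case: (pick_other i j h) => k [] ; rewrite inE => ek ki kj.
case: (pick_other x y (eq_leq (esym (tri_card i)) : 2 < #|tt i|)) => z [zi zx zy].
have Ej := Puniq pxy ei ej; have Ek := Puniq pxy ei ek.
case/and3P: (ei) => xy xi yi.
apply: (rainbowP (x:=x) (y:=y) (z:=z) (i:=i) (j:=j) (k:=k)) => //.
- by rewrite eq_sym.
- by rewrite eq_sym.
- by rewrite eq_sym.
- by rewrite -Ej; apply: edgeP => //; rewrite eq_sym.
- by rewrite -Ek; apply: edgeP => //; rewrite eq_sym.
Qed.

Lemma two_impure i a b c : a \in tt i -> b \in tt i -> c \in tt i ->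
  a != b -> b != c -> a != c -> ~~ P a b -> ~~ P b c -> False.
Proof.
move=> ai bi ci ab bc ac nab nbc.
case: (notP nab (edgeP ab ai bi)) => k1 [e1 n1].
case: (notP nbc (edgeP bc bi ci)) => k2 [e2 n2].
apply: (rainbow (x:=a) (y:=b) (z:=c) (i:=k1) (j:=k2) (k:=i)) => //.
- apply/eqP => E; move/eqP: n1; apply.
  case/and3P: e1 => _ a1 b1; case/and3P: e2 => _ b2 c2.
  by apply: (same3 (tri_card k1) (tri_card i) a1 b1 _ ai bi ci ab bc ac); rewrite E.
- exact: edgeP.
Qed.

Lemma two_pure_mult i a b c : a \in tt i -> b \in tt i -> c \in tt i ->
  a != b -> b != c -> a != c -> P a b -> ~~ P a c -> mult a b = 1.
Proof.
move=> ai bi ci ab bc ac pab nac.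
have ei : edge_of a b (tt i) by exact: edgeP.
have iA : i \in [set j | edge_of a b (tt j)] by rewrite inE.
apply/eqP; rewrite eqn_leq; apply/andP; split; last first.
  by rewrite /mult card_gt0; apply/set0Pn; exists i.
rewrite leqNgt; apply/negP => h.
move: h; rewrite /mult (cardsD1 i) iA ltnS card_gt0 => /set0Pn [j].
rewrite !inE => /andP [ji ej].
have Ej := Puniq pab ei ej.
case: (notP nac (edgeP ac ai ci)) => k [ek nk].
apply: (rainbowP (x:=a) (y:=b) (z:=c) (i:=i) (j:=j) (k:=k)) => //.
- by rewrite eq_sym.
- by apply: contraNneq nk => <-; rewrite Ej.
- by apply: contraNneq nk => <-.
- by rewrite -Ej; apply: edgeP.
Qed.


Definition N x := [set y | P x y].
Definition d x := #|N x|.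
Definition ct (x y : 'I_n) : bool := [exists z, P x z && P y z].
Definition Tr (x y z : 'I_n) : bool := [&& P x y, P y z & P x z].
Definition w x y := 3 + ct x y.
Definition v x y := if mult x y == 1 then 2 * w x y else w x y.
Definition V x y := P x y * v x y.
Definition charge i := \sum_(x : 'I_n) \sum_(y : 'I_n) edge_of x y (tt i) * V x y.

Lemma ct_sym x y : ct x y = ct y x.
Proof. by apply: eq_existsb => z; rewrite andbC. Qed.

Lemma V_sym x y : V x y = V y x.
Proof. by rewrite /V /v /w P_sym mult_sym ct_sym. Qed.

Lemma dE x : d x = \sum_(y : 'I_n) (P x y : nat).
Proof. by rewrite /d /N -sum1dep_card big_mkcond; apply: eq_bigr => y _; case: (P x y). Qed.

Lemma sum_unique (F : 'I_n -> bool) z0 : F z0 -> (forall z, F z -> z = z0) ->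
  \sum_(z : 'I_n) (F z : nat) = 1.
Proof.
move=> f0 u; rewrite (bigD1 z0) //= f0 big1 // => z /= nz.
by case: (boolP (F z)) => // /u zz; move: nz; rewrite zz eqxx.
Qed.

Lemma sum2 (F : 'I_n -> nat) a b : a != b -> F a + F b <= \sum_x F x.
Proof.
move=> ab; rewrite (bigD1 a) // (bigD1 b) /=; last by rewrite eq_sym.
by rewrite addnA leq_addr.
Qed.

Lemma sum3 (F : 'I_n -> nat) a b c : a != b -> b != c -> a != c ->
  F a + F b + F c <= \sum_x F x.
Proof.
move=> ab bc ac; rewrite (bigD1 a) // (bigD1 b) /=; last by rewrite eq_sym.
rewrite (bigD1 c) /=; last by rewrite eq_sym ac eq_sym bc.
by rewrite !addnA leq_addr.
Qed.

Lemma V3 x y : P x y -> 3 <= V x y.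
Proof. by move=> p; rewrite /V p mul1n /v /w; case: (_ == _); lia. Qed.
Lemma V4 x y : P x y -> ct x y -> 4 <= V x y.
Proof. by move=> p c; rewrite /V p mul1n /v /w c; case: (_ == _). Qed.
Lemma V6 x y : P x y -> mult x y = 1 -> 6 <= V x y.
Proof. by move=> p m; rewrite /V p mul1n /v m eqxx /w; lia. Qed.

Lemma charge_ge i : 24 <= charge i.
Proof.
have c3 : 2 < #|tt i| by rewrite tri_card.
have : 0 < #|tt i| by rewrite tri_card.
rewrite card_gt0 => /set0Pn [a ai].
case: (pick_other a a c3) => b [bi ba _].
case: (pick_other a b c3) => c [ci ca cb].
have ab : a != b by rewrite eq_sym.
have ac : a != c by rewrite eq_sym.
have bc : b != c by rewrite eq_sym.
have H : V a b + V a c + (V b a + V b c) + (V c a + V c b) <= charge i.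
  apply: (leq_trans _ (sum3 (fun x => \sum_y edge_of x y (tt i) * V x y) ab bc ac)) => /=.
  apply: leq_add; first apply: leq_add.
  - apply: (leq_trans _ (sum2 (fun y => edge_of a y (tt i) * V a y) bc)) => /=.
    by rewrite (edgeP ab ai bi) (edgeP ac ai ci) !mul1n.
  - apply: (leq_trans _ (sum2 (fun y => edge_of b y (tt i) * V b y) ac)) => /=.
    by rewrite (edgeP ba bi ai) (edgeP bc bi ci) !mul1n.
  - apply: (leq_trans _ (sum2 (fun y => edge_of c y (tt i) * V c y) ab)) => /=.
    by rewrite (edgeP ca ci ai) (edgeP cb ci bi) !mul1n.
apply: leq_trans H.
rewrite (V_sym b a) (V_sym c a) (V_sym c b).
case pab: (P a b); case pbc: (P b c); case pac: (P a c).
- have h1 : ct a b by apply/existsP; exists c; rewrite pac pbc.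
  have h2 : ct b c by apply/existsP; exists a; rewrite (P_sym b a) pab (P_sym c a) pac.
  have h3 : ct a c by apply/existsP; exists b; rewrite pab (P_sym c b) pbc.
  have := V4 pab h1; have := V4 pbc h2; have := V4 pac h3; move: (V a b) (V a c) (V b c); clear; move=> ? ? ?; lia.
- have m1 := two_pure_mult ai bi ci ab bc ac pab (negbT pac).
  have m2 : mult b c = 1.
    rewrite mult_sym; apply: (two_pure_mult ci bi ai) => //; try by rewrite eq_sym.
    by rewrite P_sym.
    by rewrite P_sym pac.
  have := V6 pab m1; have := V6 pbc m2; move: (V a b) (V a c) (V b c); clear; move=> ? ? ?; lia.
- have m1 : mult a b = 1.
    rewrite mult_sym; apply: (two_pure_mult bi ai ci) => //; try by rewrite eq_sym.
    by rewrite P_sym.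
    by rewrite pbc.
  have m2 : mult a c = 1.
    rewrite mult_sym; apply: (two_pure_mult ci ai bi) => //; try by rewrite eq_sym.
    by rewrite P_sym.
    by rewrite P_sym pbc.
  have := V6 pab m1; have := V6 pac m2; move: (V a b) (V a c) (V b c); clear; move=> ? ? ?; lia.
- exfalso; apply: (two_impure ai ci bi) => //; try by rewrite eq_sym.
  by rewrite pac. by rewrite P_sym pbc.
- have m1 : mult b c = 1.
    apply: (two_pure_mult bi ci ai) => //; try by rewrite eq_sym.
    by rewrite P_sym pab.
  have m2 : mult a c = 1.
    apply: (two_pure_mult ai ci bi) => //; try by rewrite eq_sym.
    by rewrite pab.
  have := V6 pbc m1; have := V6 pac m2; move: (V a b) (V a c) (V b c); clear; move=> ? ? ?; lia.
- exfalso; apply: (two_impure bi ai ci) => //; try by rewrite eq_sym.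
  by rewrite P_sym pab. by rewrite pac.
- exfalso; apply: (two_impure ai bi ci) => //; try by rewrite eq_sym.
  by rewrite pab. by rewrite pbc.
- exfalso; apply: (two_impure ai bi ci) => //; try by rewrite eq_sym.
  by rewrite pab. by rewrite pbc.
Qed.


Lemma sum_edge x y : \sum_(i : 'I_(size T)) (edge_of x y (tt i) : nat) = mult x y.
Proof.
by rewrite /mult -sum1dep_card [RHS]big_mkcond; apply: eq_bigr => i _; case: (edge_of _ _ _).
Qed.

Lemma multV x y : mult x y * V x y <= 2 * (P x y * w x y).
Proof.
rewrite /V /v; case: (boolP (P x y)) => p; last by rewrite !mul0n muln0.
have := mult_le2 p; rewrite !mul1n.
case: (mult x y) => [|[|[|k]]] //= _; rewrite ?mul0n //; move: (w x y); clear; move=> ?; lia.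
Qed.

Lemma sum_charge :
  \sum_(i : 'I_(size T)) charge i <= 2 * \sum_(x : 'I_n) \sum_(y : 'I_n) P x y * w x y.
Proof.
rewrite /charge exchange_big /= big_distrr /=; apply: leq_sum => x _.
rewrite exchange_big /= big_distrr /=; apply: leq_sum => y _.
by rewrite -big_distrl /= sum_edge multV.
Qed.

Definition E := \sum_(x : 'I_n) \sum_(y : 'I_n) (P x y : nat).
Definition Et := \sum_(x : 'I_n) \sum_(y : 'I_n) (P x y && ct x y : nat).
Definition E0 := \sum_(x : 'I_n) \sum_(y : 'I_n) (P x y && ~~ ct x y : nat).

Lemma count_T : 12 * size T <= 3 * E + Et.
Proof.
have h1 : 24 * size T <= \sum_(i : 'I_(size T)) charge i.
  have : \sum_(i : 'I_(size T)) 24 <= \sum_(i : 'I_(size T)) charge i.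
    by apply: leq_sum => i _; exact: charge_ge.
  by rewrite sum_nat_const card_ord mulnC.
have h2 : \sum_(x : 'I_n) \sum_(y : 'I_n) P x y * w x y = 3 * E + Et.
  rewrite /E /Et big_distrr -big_split /=; apply: eq_bigr => x _.
  rewrite big_distrr -big_split /=; apply: eq_bigr => y _.
  by rewrite /w; case: (P x y); case: (ct x y).
have := leq_trans h1 sum_charge; rewrite h2.
move: (size T) (3 * E + Et); clear; move=> ? ?; lia.
Qed.

Lemma E_split : E = Et + E0.
Proof.
rewrite /E /Et /E0 -big_split; apply: eq_bigr => x _; rewrite -big_split; apply: eq_bigr => y _.
by case: (P x y); case: (ct x y).
Qed.

Lemma E_d : E = \sum_(x : 'I_n) d x.
Proof. by apply: eq_bigr => x _; rewrite dE. Qed.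

Definition S := \sum_(x : 'I_n) d x * d x.
Definition A := \sum_(x : 'I_n) \sum_(y : 'I_n) (P x y && ct x y) * d x.
Definition B := \sum_(x : 'I_n) \sum_(y : 'I_n) (P x y && ~~ ct x y) * d x.

Lemma S_split : S = A + B.
Proof.
rewrite /S /A /B -big_split; apply: eq_bigr => x _.
rewrite -big_split /= {1}(dE x) big_distrl; apply: eq_bigr => y _.
by case: (P x y); case: (ct x y); rewrite /= ?mul1n ?mul0n ?addn0.
Qed.

Lemma local2 x y : P x y -> ~~ ct x y -> d x + d y <= n.
Proof.
move=> p nc; rewrite /d -cardsUI.
have -> : #|N x :&: N y| = 0.
  apply/eqP; rewrite cards_eq0; apply/eqP/setP => z; rewrite !inE.
  apply/negbTE; apply: contra nc => h; apply/existsP; exists z; exact: h.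
by rewrite addn0; apply: leq_trans (max_card _) _; rewrite card_ord.
Qed.

Lemma B_bound : 2 * B <= n * E0.
Proof.
have B' : B = \sum_(x : 'I_n) \sum_(y : 'I_n) (P x y && ~~ ct x y) * d y.
  rewrite /B exchange_big /=; apply: eq_bigr => x _; apply: eq_bigr => y _.
  by rewrite P_sym ct_sym.
rewrite mul2n -addnn {2}B' /B /E0 -big_split big_distrr /=; apply: leq_sum => x _.
rewrite -big_split big_distrr /=; apply: leq_sum => y _.
case: (boolP (P x y && ~~ ct x y)) => [/andP [p nc]|_]; last by rewrite !mul0n muln0.
by rewrite !mul1n muln1 local2.
Qed.


Lemma Tr_sym12 x y z : Tr y x z = Tr x y z.
Proof. by rewrite /Tr (P_sym y x); case: (P x y); case: (P x z); case: (P y z). Qed.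
Lemma Tr_sym13 x y z : Tr z y x = Tr x y z.
Proof.
by rewrite /Tr (P_sym z y) (P_sym y x) (P_sym z x); case: (P x y); case: (P x z); case: (P y z).
Qed.

Lemma Tr_sum x y : (P x y && ct x y : nat) = \sum_(z : 'I_n) (Tr x y z : nat).
Proof.
case: (boolP (P x y && ct x y)) => [/andP [p /existsP [z0 /andP [p1 p2]]]|h].
  rewrite (@sum_unique (fun z => Tr x y z) z0) //; first by rewrite /Tr p p1 p2.
  by move=> z /and3P [_ q2 q1]; rewrite (uniqZ p p1 p2 q1 q2).
rewrite big1 // => z _; apply/eqP; rewrite eqb0; apply: contra h => /and3P [p q2 q1].
by rewrite p; apply/existsP; exists z; rewrite q1 q2.
Qed.

Lemma local3 x y z : Tr x y z -> d x + d y + d z <= n + 3.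
Proof.
case/and3P => pxy pyz pxz.
have pyx : P y x by rewrite P_sym.
have pzy : P z y by rewrite P_sym.
have pzx : P z x by rewrite P_sym.
have Ixy : N x :&: N y = [set z].
  apply/setP => u; rewrite !inE; apply/andP/eqP => [[h1 h2]|->]; last by rewrite pxz pyz.
  by rewrite (uniqZ pxy pxz pyz h1 h2).
have Ixz : N x :&: N z = [set y].
  apply/setP => u; rewrite !inE; apply/andP/eqP => [[h1 h2]|->]; last by rewrite pxy pzy.
  by rewrite (uniqZ pxz pxy pzy h1 h2).
have Iyz : N y :&: N z = [set x].
  apply/setP => u; rewrite !inE; apply/andP/eqP => [[h1 h2]|->]; last by rewrite pyx pzx.
  by rewrite (uniqZ pyz pyx pzx h1 h2).
have h1 := cardsUI (N x) (N y).
have h2 := cardsUI (N x :|: N y) (N z).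
rewrite setIUl Ixz Iyz Ixy cards1 in h1 h2.
have h3 : #|[set y] :|: [set x]| = 2.

  by rewrite cardsU1 cards1 inE eq_sym (P_neq pxy).
rewrite h3 in h2.
have h4 : #|N x :|: N y :|: N z| <= n by apply: leq_trans (max_card _) _; rewrite card_ord.
rewrite /d; move: h1 h2 h4; clear; lia.
Qed.

Lemma A_bound : 3 * A <= (n + 3) * Et.
Proof.
pose F (G : 'I_n -> 'I_n -> 'I_n -> nat) :=
  \sum_(x : 'I_n) \sum_(y : 'I_n) \sum_(z : 'I_n) Tr x y z * G x y z.
have hA : A = F (fun x y z => d x).
  rewrite /A /F; apply: eq_bigr => x _; apply: eq_bigr => y _.
  by rewrite Tr_sum big_distrl.
have hAy : A = F (fun x y z => d y).
  rewrite hA /F [RHS]exchange_big /=; apply: eq_bigr => x _; apply: eq_bigr => y _.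
  by apply: eq_bigr => z _; rewrite Tr_sym12.
have hAz : A = F (fun x y z => d z).
  rewrite hA /F.
  transitivity (\sum_(x : 'I_n) \sum_(y : 'I_n) \sum_(z : 'I_n) Tr z y x * d x).
    by apply: eq_bigr => x _; apply: eq_bigr => y _; apply: eq_bigr => z _; rewrite Tr_sym13.
  transitivity (\sum_(x : 'I_n) \sum_(z : 'I_n) \sum_(y : 'I_n) Tr z y x * d x).
    by apply: eq_bigr => x _; apply: exchange_big.
  transitivity (\sum_(z : 'I_n) \sum_(x : 'I_n) \sum_(y : 'I_n) Tr z y x * d x).
    by apply: exchange_big.
  by apply: eq_bigr => z _; apply: exchange_big.
have hEt : Et = F (fun x y z => 1).
  rewrite /Et /F; apply: eq_bigr => x _; apply: eq_bigr => y _.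
  by rewrite Tr_sum; apply: eq_bigr => z _; rewrite muln1.
rewrite hEt /F [X in _ <= X]big_distrr /=.
have -> : 3 * A = A + A + A by lia.
rewrite {1}hA {1}hAy hAz /F -!big_split /=; apply: leq_sum => x _.
rewrite big_distrr -!big_split /=; apply: leq_sum => y _.
rewrite big_distrr -!big_split /=; apply: leq_sum => z _.
case: (boolP (Tr x y z)) => t; last by rewrite !mul0n.
by rewrite !mul1n muln1 local3.
Qed.

Lemma amgm a b : 2 * (a * b) <= a * a + b * b.
Proof.
have [h|h] := leqP a b.
  by rewrite -(subnKC h); set k := b - a; nia.
by rewrite -(subnKC (ltnW h)); set k := a - b; nia.
Qed.

Lemma CS (F : 'I_n -> nat) :
  (\sum_(x : 'I_n) F x) * (\sum_(x : 'I_n) F x) <= n * \sum_(x : 'I_n) F x * F x.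
Proof.
have h1 : (\sum_(x : 'I_n) F x) * (\sum_(x : 'I_n) F x) =
          \sum_(x : 'I_n) \sum_(y : 'I_n) F x * F y.
  by rewrite big_distrl; apply: eq_bigr => x _; rewrite big_distrr.
have h2 : \sum_(x : 'I_n) \sum_(y : 'I_n) (F x * F x + F y * F y) =
          2 * (n * \sum_(x : 'I_n) F x * F x).
  rewrite (eq_bigr (fun x => n * (F x * F x) + \sum_(y : 'I_n) F y * F y)).
    by rewrite big_split /= sum_nat_const card_ord -big_distrr /=; lia.
  by move=> x _; rewrite big_split /= sum_nat_const card_ord.
have h3 : 2 * ((\sum_(x : 'I_n) F x) * (\sum_(x : 'I_n) F x)) <=
          \sum_(x : 'I_n) \sum_(y : 'I_n) (F x * F x + F y * F y).
  rewrite h1 big_distrr /=; apply: leq_sum => x _.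
  rewrite big_distrr /=; apply: leq_sum => y _.
  exact: amgm.
rewrite h2 in h3; move: h3; clear; lia.
Qed.

Lemma final_nat : 24 * size T <= 3 * n * n + 8 * n.
Proof.
have c1 := CS d.
have c2 := count_T.
have c3 := E_split.
have c4 := S_split.
have c5 := A_bound.
have c6 := B_bound.
rewrite -E_d -/S in c1.
move: c1 c2 c3 c4 c5 c6; rewrite /S; move: (size T) E Et E0 A B (\sum_(x : 'I_n) d x * d x).
clear; move=> t e et e0 a b s c1 c2 c3 c4 c5 c6.
have X : 6 * s + n * et <= 3 * n * e + 6 * et by nia.
have Y : 6 * (e * e) + n * n * et <= 3 * n * n * e + 6 * n * et by nia.
case: (posnP e) => [e0'|epos].
  by move: c2 c3; rewrite e0'; lia.
have Z : 2 * e <= n * n + 2 * n.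
  have : e * (6 * e) <= e * (3 * n * n + 6 * n) by nia.
  by rewrite leq_pmul2l //; lia.
have W : e * (6 * e + 2 * et) <= e * (3 * n * n + 8 * n) by nia.
move: W; rewrite leq_pmul2l //; lia.
Qed.

End Main.

From mathcomp Require Import reals.
From mathcomp Require Import lra.
Import Order.TTheory GRing.Theory Num.Theory.
Unset Implicit Arguments.
Local Open Scope ring_scope.

Theorem theorem3p1 (R : realType) (eps : R) (heps : 0 < eps) :
  exists N : nat, forall n : nat, (N <= n)%N ->
    forall T : seq {set 'I_n},
      triangle_family T -> ~ has_rainbow_triangle T ->
      (size T)%:R <= (1 + eps) * ((n%:R) ^+ 2 / 8) :> R.
Proof.
have h0 : 0 <= 3 / eps by apply: divr_ge0 => //; apply: ltW.
exists (Num.Def.archi_bound (3 / eps)) => n hn T htri hnr.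
have hb := archi_boundP h0.
have hN : 3 / eps < n%:R by apply: lt_le_trans hb _; rewrite ler_nat.
have he : 3 < eps * n%:R.
  by move: hN; rewrite ltr_pdivrMr // mulrC.
have hf := final_nat htri hnr.
have hR : (24 * size T)%:R <= (3 * n * n + 8 * n)%:R :> R by rewrite ler_nat.
rewrite !natrM !natrD !natrM in hR.
have m0 : 0 <= n%:R :> R by apply: ler0n.
set t := (size T)%:R in hR *; set m := n%:R in hR he m0 *.
have hm : 3 * m <= eps * m * m by nra.
rewrite expr2; nra.
Qed.
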